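(* For every $\alpha\ge1$ and $\varepsilon>0$ there is no deterministic $\alpha$-approximation algorithm for the Weighted Monotone Subset Minimization problem in the membership model which runs in time $\left(\mathrm{brute}(\alpha)-\varepsilon\right)^n\cdot n^{O(1)}$, where $n=|U|$.
   Context: A set system $\mathcal{F}\subseteq 2^U$ over a finite set $U$ is monotone if $U\in\mathcal{F}$ and whenever $T\subseteq S\subseteq U$ and $T\in\mathcal{F}$ then $S\in\mathcal{F}$. An instance of the Weighted Monotone Subset Minimization problem (WSM) is a triple $(U,w,\mathcal{F})$ with $U$ finite, $w:U\to\mathbb{N}$ and $\mathcal{F}$ a monotone set system of $U$; the goal is to find $S\in\mathcal{F}$ minimizing $w(S)=\sum_{e\in S}w(e)$; $\mathrm{opt}(U,w,\mathcal{F})=\min\{w(S)\mid S\in\mathcal{F}\}$. In the membership model the algorithm receives $U$ and $w$ as input and may query, in a single step, whether a given $S\subseteq U$ belongs to $\mathcal{F}$. An algorithm is an $\alpha$-approximation for WSM in the membership model if for every instance it returns $S\in\mathcal{F}$ with $w(S)\le\alpha\cdot\mathrm{opt}(U,w,\mathcal{F})$. For $\alpha\ge1$, $\mathrm{brute}(\alpha)=1+\exp\left(-\alpha\cdot\mathcal{H}(1/\alpha)\right)$, where $\mathcal{H}(x)=-x\ln x-(1-x)\ln(1-x)$ (with $0\ln0=0$). *)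

(* Defs.v *)
From Stdlib Require Import Reals.
From mathcomp Require Import all_boot.

Set Implicit Arguments.
Unset Strict Implicit.
Unset Printing Implicit Defensive.

(* Ground set U = 'I_n (n = |U|). A set system is F : {set {set 'I_n}}. *)

Definition monotone_sys (n : nat) (F : {set {set 'I_n}}) : Prop :=
  setT \in F /\ (forall T S : {set 'I_n}, T \subset S -> T \in F -> S \in F).

Definition wt (n : nat) (w : 'I_n -> nat) (S : {set 'I_n}) : nat :=
  \sum_(e in S) w e.

(* opt(U,w,F) = min { w(S) | S in F } (w(setT) is a valid start since setT \in F
   for monotone systems). *)
Definition opt (n : nat) (w : 'I_n -> nat) (F : {set {set 'I_n}}) : nat :=
  \big[minn/wt w setT]_(S in F) wt w S.

(* Deterministic algorithm in the membership model, for a fixed input (U,w):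
   an adaptive query tree. *)
Inductive qtree (n : nat) : Type :=
| Leaf : {set 'I_n} -> qtree n
| Query : {set 'I_n} -> qtree n -> qtree n -> qtree n.

Fixpoint output (n : nat) (t : qtree n) (F : {set {set 'I_n}}) : {set 'I_n} :=
  match t with
  | Leaf X => X
  | Query Q ty tn => if Q \in F then output ty F else output tn F
  end.

Fixpoint nqueries (n : nat) (t : qtree n) (F : {set {set 'I_n}}) : nat :=
  match t with
  | Leaf _ => 0
  | Query Q ty tn => (if Q \in F then nqueries ty F else nqueries tn F).+1
  end.

Definition algorithm : Type := forall n : nat, ('I_n -> nat) -> qtree n.

Definition is_approx (alpha : R) (A : algorithm) : Prop :=
  forall (n : nat) (w : 'I_n -> nat) (F : {set {set 'I_n}}),
    monotone_sys F ->
    output (A n w) F \in F /\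
    Rle (INR (wt w (output (A n w) F))) (Rmult alpha (INR (opt w F))).

(* Running time (measured by a lower bound: number of oracle queries, each a
   single step) is (b)^n * n^{O(1)}: there are constants c, N with
   #queries <= b^n * n^c for every instance with n >= N. *)
Definition runs_in (A : algorithm) (b : R) : Prop :=
  exists c N : nat, forall (n : nat) (w : 'I_n -> nat) (F : {set {set 'I_n}}),
    (N <= n)%N -> monotone_sys F ->
    Rle (INR (nqueries (A n w) F)) (Rmult (pow b n) (pow (INR n) c)).

Definition xlnx (x : R) : R := if Req_EM_T x R0 then R0 else Rmult x (ln x).

Definition entropy (x : R) : R := Rminus (Ropp (xlnx x)) (xlnx (Rminus R1 x)).

Definition brute (alpha : R) : R :=
  Rplus R1 (exp (Ropp (Rmult alpha (entropy (Rinv alpha))))).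

(* Main.v *)
Require Import Defs.
From Stdlib Require Import Reals.
From mathcomp Require Import all_boot.
From Stdlib Require Import Reals Lra Lia Classical.
From mathcomp Require Import all_boot zify.
Open Scope R_scope.

Lemma sum_nonneg f n : (forall j, (j <= n)%coq_nat -> 0 <= f j) -> 0 <= sum_f_R0 f n.
Proof.
  induction n as [|n IH]; intros Hf; simpl.
  - apply Hf; lia.
  - assert (0 <= sum_f_R0 f n) by (apply IH; intros; apply Hf; lia).
    assert (0 <= f (S n)) by (apply Hf; lia). lra.
Qed.

Lemma sum_ge_term f n i : (forall j, (j <= n)%coq_nat -> 0 <= f j) -> (i <= n)%coq_nat -> f i <= sum_f_R0 f n.
Proof.
  induction n as [|n IH]; intros Hf Hi.
  - simpl. replace i with 0%nat by lia. lra.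
  - simpl. destruct (Nat.eq_dec i (S n)) as [->|Hne].
    + assert (0 <= sum_f_R0 f n) by (apply sum_nonneg; intros; apply Hf; lia).
      lra.
    + assert (f i <= sum_f_R0 f n) by (apply IH; [intros; apply Hf; lia| lia]).
      assert (0 <= f (S n)) by (apply Hf; lia). lra.
Qed.

Lemma sum_le_max f n M : (forall j, (j <= n)%coq_nat -> f j <= M) -> sum_f_R0 f n <= INR (S n) * M.
Proof.
  induction n as [|n IH]; intros Hf.
  - simpl. assert (f 0%nat <= M) by (apply Hf; lia). lra.
  - change (sum_f_R0 f (S n)) with (sum_f_R0 f n + f (S n)).
    assert (sum_f_R0 f n <= INR (S n) * M) by (apply IH; intros; apply Hf; lia).
    assert (f (S n) <= M) by (apply Hf; lia).
    rewrite (S_INR (S n)). lra.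
Qed.

Lemma sum_lt_max f n M : (forall j, (j <= n)%coq_nat -> f j < M) -> sum_f_R0 f n < INR (S n) * M.
Proof.
  induction n as [|n IH]; intros Hf.
  - simpl. assert (f 0%nat < M) by (apply Hf; lia). lra.
  - change (sum_f_R0 f (S n)) with (sum_f_R0 f n + f (S n)).
    assert (sum_f_R0 f n < INR (S n) * M) by (apply IH; intros; apply Hf; lia).
    assert (f (S n) < M) by (apply Hf; lia).
    rewrite (S_INR (S n)). lra.
Qed.

Lemma C_nonneg n k : 0 <= C n k.
Proof.
  unfold C. apply Rlt_le. apply Rdiv_lt_0_compat. apply INR_fact_lt_0.
  apply Rmult_lt_0_compat; apply INR_fact_lt_0.
Qed.

Lemma xlnx_0 : xlnx 0 = 0.
Proof. unfold xlnx. destruct (Req_EM_T 0 R0); [reflexivity| exfalso; auto]. Qed.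

Lemma xlnx_nz x : x <> 0 -> xlnx x = x * ln x.
Proof. intros H. unfold xlnx. destruct (Req_EM_T x R0); [exfalso; auto| reflexivity]. Qed.

Lemma exp_le x y : x <= y -> exp x <= exp y.
Proof. intros [H|H]; [left; apply exp_increasing; auto| right; subst; auto]. Qed.

Definition Lc (alpha : R) := alpha * entropy (/ alpha).

Lemma Cbound alpha k t : 1 <= alpha -> (t <= k)%coq_nat -> INR k <= alpha * INR t ->
  C k t <= exp (Lc alpha * INR t).
Proof.
  intros Ha Htk Hk.
  destruct (Req_dec alpha 1) as [E1|E1].
  - subst alpha. rewrite Rmult_1_l in Hk. apply INR_le in Hk.
    replace k with t by lia.
    unfold Lc, entropy. rewrite Rinv_1.
    replace (R1 - 1) with 0 by lra. rewrite xlnx_0 xlnx_nz; [|lra].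
    rewrite ln_1.
    replace (C t t) with 1.
    2:{ unfold C. rewrite Nat.sub_diag. change (INR (Factorial.fact 0)) with 1.
        assert (INR (Factorial.fact t) <> 0) by (apply Rgt_not_eq, INR_fact_lt_0). field; auto. } replace (1 * (- (1 * 0) - 0) * INR t) with 0 by ring.
    rewrite exp_0. lra.
  - assert (Ha' : 1 < alpha) by lra.
    set (p := / alpha).
    assert (Hp0 : 0 < p) by (unfold p; apply Rinv_0_lt_compat; lra).
    assert (Hp1 : p < 1) by (unfold p; rewrite <- Rinv_1; apply Rinv_lt_contravar; lra).
    assert (Hsum := Stdlib.Reals.Binomial.binomial p (1 - p) k).
    replace (p + (1 - p)) with 1 in Hsum by ring. rewrite pow1 in Hsum.
    assert (Hterm : C k t * p ^ t * (1 - p) ^ (k - t) <= 1).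
    { eapply Rle_trans; [| apply Req_le; symmetry; exact Hsum].
      apply (sum_ge_term (fun i => C k i * p ^ i * (1 - p) ^ (k - i)%coq_nat) k t); [|lia].
      intros j _. apply Rmult_le_pos; [apply Rmult_le_pos|]; [apply C_nonneg| |];
        apply pow_le; lra. }
    assert (HL : Lc alpha = ln (/ p) + (alpha - 1) * ln (/ (1 - p))).
    { unfold Lc, entropy. fold p.
      rewrite !xlnx_nz; [|lra|lra].
      rewrite ln_Rinv; [|lra]. rewrite ln_Rinv; [|lra].
      assert (alpha * p = 1) by (unfold p; field; lra).
      apply eq_trans with (- (alpha * p) * ln p - (alpha - alpha * p) * ln (1 - p)). replace R1 with 1 by reflexivity. ring.
      rewrite H. ring. }
    assert (Hpt : 0 < p ^ t) by (apply pow_lt; lra).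
    assert (Hqt : 0 < (1 - p) ^ (k - t)) by (apply pow_lt; lra).
    clearbody p.
    assert (HC : C k t <= (/ p) ^ t * (/ (1 - p)) ^ (k - t)).
    { rewrite !pow_inv -Rinv_mult.
      apply (Rmult_le_reg_r (p ^ t * (1 - p) ^ (k - t))).
      apply Rmult_lt_0_compat; auto.
      rewrite Rinv_l; [|apply Rgt_not_eq, Rmult_lt_0_compat; auto].
      rewrite <- Rmult_assoc. exact Hterm. }
    rewrite <- (Rpower_pow t) in HC; [|apply Rinv_0_lt_compat; lra].
    rewrite <- (Rpower_pow (k - t)) in HC; [|apply Rinv_0_lt_compat; lra].
    unfold Rpower in HC. rewrite <- exp_plus in HC.
    eapply Rle_trans; [exact HC|]. apply exp_le.
    rewrite HL. rewrite (ln_Rinv (1 - p)); [|lra].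
    assert (HX : ln (1 - p) < 0) by (rewrite <- ln_1; apply ln_increasing; lra).
    assert (Hm : INR (k - t)%coq_nat = INR k - INR t) by (apply minus_INR; lia).
    change (k - t)%N with (k - t)%coq_nat. rewrite Hm.
    assert (0 <= INR t) by apply pos_INR.
    assert (0 <= (alpha * INR t - INR k) * (- ln (1 - p))) by (apply Rmult_le_pos; lra).
    nra.
Qed.

Lemma fact_eq n : n`! = Factorial.fact n.
Proof. elim: n => [|n IH] //. by rewrite factS IH. Qed.

Lemma INR_bin n k : (k <= n)%N -> INR 'C(n, k) = C n k.
Proof.
  move=> Hk. have H := f_equal INR (bin_fact Hk).
  rewrite -!multE !mult_INR !fact_eq in H.
  unfold C. rewrite -H -minusE.
  have h1 := INR_fact_lt_0 k. have h2 := INR_fact_lt_0 (n - k)%coq_nat.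
  field. split; apply Rgt_not_eq; auto.
Qed.

Lemma max_term x n : 0 < x -> exists t, (t <= n)%coq_nat /\ (x + 1) ^ n / INR (S n) <= C n t * x ^ t.
Proof.
  intros Hx. apply NNPP. intros Hn.
  assert (Hall : forall j, (j <= n)%coq_nat -> C n j * x ^ j * 1 ^ (n - j)%coq_nat < (x + 1) ^ n / INR (S n)).
  { intros j Hj. rewrite pow1 Rmult_1_r. apply Rnot_le_lt. intros Hlt. apply Hn. exists j. split; auto. }
  have Hs := sum_lt_max _ _ _ Hall.
  rewrite <- (Stdlib.Reals.Binomial.binomial x 1 n) in Hs.
  have HS : 0 < INR (S n) by apply lt_0_INR; lia.
  have Hp : 0 < (x + 1) ^ n by apply pow_lt; lra.
  replace (INR (S n) * ((x + 1) ^ n / INR (S n))) with ((x + 1) ^ n) in Hs by (field; lra).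
  lra.
Qed.

Lemma bern h m : 0 <= h -> 1 + INR m * h <= (1 + h) ^ m.
Proof.
  intros Hh. induction m as [|m IH].
  - simpl. lra.
  - rewrite S_INR. change ((1 + h) ^ S m) with ((1 + h) * (1 + h) ^ m).
    assert (0 <= INR m) by apply pos_INR. nra.
Qed.

Lemma geo_poly rho k N : 0 < rho < 1 ->
  exists n, (N <= n)%coq_nat /\ 2 * rho ^ n * (INR n + 1) ^ k < 1.
Proof.
  intros [H0 H1].
  set (h := / rho - 1).
  assert (Hh : 0 < h).
  { unfold h. assert (1 < / rho) by (rewrite <- Rinv_1; apply Rinv_lt_contravar; lra). lra. }
  assert (Hhk : 0 < h ^ (S k)) by (apply pow_lt; lra).
  destruct (INR_archimed (h ^ (S k)) (2 * (INR k + 2) ^ k) Hhk) as [m0 Hm0].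
  set (m := (m0 + N + 1)%coq_nat).
  assert (Hm1 : 1 <= INR m) by (unfold m; rewrite <- INR_1; apply le_INR; lia).
  assert (Hmm0 : INR m0 <= INR m).
  { unfold m. apply le_INR. apply Nat.le_trans with (m0 + N)%coq_nat; apply Nat.le_add_r. }
  assert (HA : 2 * (INR k + 2) ^ k < INR m * h ^ (S k)).
  { assert (INR m0 * h ^ S k <= INR m * h ^ S k) by (apply Rmult_le_compat_r; lra). lra. }
  exists (m * S k)%coq_nat. split; [unfold m; nia|].
  rewrite mult_INR S_INR.
  assert (Hk0 : 0 <= INR k) by apply pos_INR.
  assert (HP : (INR m * (INR k + 1) + 1) ^ k <= (INR m * (INR k + 2)) ^ k).
  { apply pow_incr. split; nra. }
  assert (HB : (INR m * h) ^ S k <= (/ rho) ^ (m * S k)%coq_nat).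
  { rewrite pow_mult. apply pow_incr. split; [apply Rmult_le_pos; lra|].
    replace (/ rho) with (1 + h) by (unfold h; ring).
    have := bern h m. lra. }
  rewrite Rpow_mult_distr in HB. rewrite Rpow_mult_distr in HP.
  change ((INR m) ^ S k) with (INR m * INR m ^ k) in HB.
  assert (Hmk : 0 < INR m ^ k) by (apply pow_lt; lra).
  assert (HC : 2 * (INR m ^ k * (INR k + 2) ^ k) < INR m * INR m ^ k * h ^ S k).
  { replace (INR m * INR m ^ k * h ^ S k) with (INR m ^ k * (INR m * h ^ S k)) by ring.
    replace (2 * (INR m ^ k * (INR k + 2) ^ k)) with (INR m ^ k * (2 * (INR k + 2) ^ k)) by ring.
    apply Rmult_lt_compat_l; auto. }
  rewrite pow_inv in HB.
  assert (Hr : 0 < rho ^ (m * S k)%coq_nat) by (apply pow_lt; lra).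
  set (R := rho ^ (m * S k)%coq_nat) in *.
  assert (2 * (INR m * (INR k + 1) + 1) ^ k < / R) by lra.
  apply (Rmult_lt_compat_l R) in H; auto.
  rewrite Rinv_r in H; [|lra]. lra.
Qed.

Section Comb.
Variable n : nat.
Variables alpha : R.
Variable t : nat.

Definition bigb (S : {set 'I_n}) : bool :=
  if Rlt_dec (alpha * INR t) (INR #|S|) then true else false.

Definition Gfam : {set {set 'I_n}} := [set S : {set 'I_n} | (S == setT) || bigb S].
Definition FT (T : {set 'I_n}) : {set {set 'I_n}} := [set S : {set 'I_n} | (T \subset S) || bigb S].

Lemma bigbP (S : {set 'I_n}) : reflect (alpha * INR t < INR #|S|) (bigb S).
Proof. rewrite /bigb. case: Rlt_dec => h; constructor; auto. Qed.

Lemma bigb_mono (S1 S2 : {set 'I_n}) : S1 \subset S2 -> bigb S1 -> bigb S2.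
Proof.
  move=> Hs /bigbP H1. apply/bigbP. eapply Rlt_le_trans; [exact H1|].
  apply le_INR. apply/leP. exact: subset_leq_card.
Qed.

Lemma mono_G : monotone_sys Gfam.
Proof.
  split; first by rewrite inE eqxx.
  move=> T V HTS. rewrite !inE => /orP [/eqP HT | Hb].
  - subst T. have -> : V = setT by apply/eqP; rewrite eqEsubset HTS subsetT.
    by rewrite eqxx.
  - by rewrite (bigb_mono _ _ HTS Hb) orbT.
Qed.

Lemma mono_FT T : monotone_sys (FT T).
Proof.
  split; first by rewrite inE subsetT.
  move=> U S HUS. rewrite !inE => /orP [HT | Hb].
  - by rewrite (subset_trans HT HUS).
  - by rewrite (bigb_mono _ _ HUS Hb) orbT.
Qed.

Lemma count_bound E (P : {set {set 'I_n}}) (L : seq {set 'I_n}) :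
  0 <= E ->
  (forall X, ~~ bigb X -> INR 'C(#|X|, t) <= E) ->
  (forall T, T \in P -> #|T| = t) ->
  (forall T, T \in P -> exists X, X \in L /\ ~~ bigb X /\ T \subset X) ->
  INR #|P| <= INR (size L) * E.
Proof.
  move=> HE HC. elim: L P => [|X L IH] P Ht Hcov.
  - have -> : P = set0.
    { apply/setP => T. rewrite inE. apply/negP => HT.
      by case: (Hcov T HT) => X [HX _]. }
    rewrite cards0 /=. lra.
  - set B := [set T : {set 'I_n} | ~~ bigb X && (T \subset X)].
    rewrite -(cardsID B P) -plusE plus_INR.
    have H1 : INR #|P :&: B| <= E.
    { case Hb: (bigb X).
      - have -> : P :&: B = set0.
        { apply/setP => T. by rewrite !inE Hb andbF. }
        rewrite cards0 /=. lra.
      - apply: (Rle_trans _ (INR 'C(#|X|, t))); last by apply: HC; rewrite Hb.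
        apply le_INR. apply/leP. rewrite -cards_draws. apply: subset_leq_card.
        apply/subsetP => T. rewrite !inE => /andP [HP /andP [_ HTX]].
        by rewrite HTX (Ht T HP) eqxx. }
    have H2 : INR #|P :\: B| <= INR (size L) * E.
    { apply: IH.
      - move=> T. rewrite inE => /andP [_ HP]. exact: Ht.
      - move=> T. rewrite !inE => /andP [HnB HP].
        case: (Hcov T HP) => Y [HY [HbY HTY]].
        move: HY. rewrite inE => /orP [/eqP HYX | HY].
        + subst Y. by rewrite HbY HTY in HnB.
        + by exists Y. }
    change (size (X :: L)) with (size L).+1. rewrite S_INR Rmult_plus_distr_r Rmult_1_l Rplus_comm. apply Rplus_le_compat; [exact H2|exact H1].
Qed.

End Comb.

Fixpoint collect n (tr : qtree n) (F : {set {set 'I_n}}) : seq {set 'I_n} :=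
  match tr with
  | Leaf X => [:: X]
  | Query Q ty tn => Q :: (if Q \in F then collect _ ty F else collect _ tn F)
  end.
Arguments collect {n}.

Lemma size_collect n (tr : qtree n) (F : {set {set 'I_n}}) : size (collect tr F) = (nqueries tr F).+1.
Proof. elim: tr => [X|Q ty IHy tn IHn] //=. by case: (Q \in F); rewrite ?IHy ?IHn. Qed.

Lemma output_in n (tr : qtree n) (F : {set {set 'I_n}}) : output tr F \in collect tr F.
Proof.
  elim: tr => [X|Q ty IHy tn IHn] /=; first by rewrite inE.
  by case: (Q \in F); rewrite inE ?IHy ?IHn orbT.
Qed.

Lemma agree n (tr : qtree n) (F G : {set {set 'I_n}}) :
  (forall Q, Q \in collect tr G -> (Q \in F) = (Q \in G)) -> output tr F = output tr G.
Proof.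
  elim: tr => [X|Q ty IHy tn IHn] //= H.
  rewrite (H Q); last by rewrite inE eqxx.
  case HQ: (Q \in G).
  - apply: IHy => Q' HQ'. apply: H. by rewrite inE HQ HQ' orbT.
  - apply: IHn => Q' HQ'. apply: H. by rewrite inE HQ HQ' orbT.
Qed.

Definition w1 n : 'I_n -> nat := fun _ => 1%N.

Lemma wt1 n (S : {set 'I_n}) : wt (@w1 n) S = #|S|.
Proof. by rewrite /wt /w1 sum1_card. Qed.

Lemma opt_le n (w : 'I_n -> nat) (F : {set {set 'I_n}}) (T : {set 'I_n}) : T \in F -> (opt w F <= wt w T)%N.
Proof.
  move=> HT. rewrite /opt.
  have : T \in index_enum {set 'I_n} by rewrite mem_index_enum.
  elim: (index_enum _) => [|x r IH] //.
  rewrite inE big_cons => /orP [/eqP <- | Hr].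
  - rewrite HT. exact: geq_minl.
  - case: (x \in F); last exact: IH.
    apply: leq_trans (geq_minr _ _) _. exact: IH.
Qed.

Lemma cover alpha (A : algorithm) n t : 0 <= alpha -> is_approx alpha A ->
  forall T : {set 'I_n}, #|T| = t ->
  exists X, X \in collect (A n (@w1 n)) (Gfam n alpha t) /\ ~~ bigb n alpha t X /\ T \subset X.
Proof.
  move=> Ha HA T HT. apply: NNPP => Hn.
  set G := Gfam n alpha t. set tr := A n (@w1 n).
  have Hno : forall X, X \in collect tr G -> ~~ bigb n alpha t X -> T \subset X -> False.
  { move=> X HX Hb HTX. apply: Hn. by exists X. }
  have Hag : output tr (FT n alpha t T) = output tr G.
  { apply: agree => Q HQ. rewrite /G /Gfam /FT !inE.
    case Hb: (bigb n alpha t Q); first by rewrite !orbT.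
    rewrite !orbF. case HTQ: (T \subset Q).
    - exfalso. apply: (Hno Q HQ); by rewrite ?Hb.
    - case HQT: (Q == setT) => //. exfalso. move/eqP: HQT => HQT.
      apply: (Hno Q HQ); first by rewrite Hb.
      by rewrite HQT subsetT. }
  case: (HA n (@w1 n) (FT n alpha t T) (mono_FT n alpha t T)) => Hin Hw.
  rewrite -/tr Hag in Hin Hw.
  set S := output tr G in Hin Hw.
  have HoT : (opt (@w1 n) (FT n alpha t T) <= t)%N.
  { rewrite -HT -(@wt1 n T). apply: opt_le. by rewrite inE subxx. }
  have Hb : ~~ bigb n alpha t S.
  { apply/negP => /bigbP Hlt. rewrite wt1 in Hw.
    have : INR (opt (@w1 n) (FT n alpha t T)) <= INR t by apply le_INR; apply/leP.
    move=> h. have : alpha * INR (opt (@w1 n) (FT n alpha t T)) <= alpha * INR t.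
    { apply Rmult_le_compat_l; auto. }
    move=> h2. lra. }
  move: Hin. rewrite inE (negbTE Hb) orbF => HTS.
  apply: (Hno S) => //. exact: output_in.
Qed.

Lemma brute_eq alpha : brute alpha = 1 + exp (- Lc alpha).
Proof. reflexivity. Qed.

Lemma exp_pow_neg L t : exp (- L) ^ t * exp (L * INR t) = 1.
Proof.
  rewrite <- Rpower_pow; [|apply exp_pos]. unfold Rpower. rewrite ln_exp.
  rewrite <- exp_plus. replace (INR t * - L + L * INR t) with 0 by ring. apply exp_0.
Qed.

Theorem corollary2p2 (alpha eps : R) :
  Rle R1 alpha -> Rlt R0 eps ->
  ~ (exists A : algorithm, is_approx alpha A /\ runs_in A (Rminus (brute alpha) eps)).
Proof.
  intros Ha Heps [A [HA [c [N Hrun]]]].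
  have Ha' : 0 <= alpha by lra.
  set (b := brute alpha - eps) in *.
  destruct (Rlt_le_dec b 0) as [Hb|Hb].
  - set (n := S (2 * N)).
    have Hr := Hrun n (w1 n) (Gfam n alpha 0) ltac:(apply/leP; unfold n; lia) (mono_G n alpha 0).
    have H0 := pos_INR (nqueries (A n (w1 n)) (Gfam n alpha 0)).
    have Hbn : b ^ n < 0.
    { unfold n. change (b ^ S (2 * N)) with (b * b ^ (2 * N)). rewrite pow_sqr.
      have : 0 < (b * b) ^ N by apply pow_lt; nra.
      intros. nra. }
    have Hnc : 0 < INR n ^ c by apply pow_lt, lt_0_INR; unfold n; lia.
    nra.
  - set (L := Lc alpha).
    set (x := exp (- L)).
    have Hx : 0 < x by apply exp_pos.
    have HK : brute alpha = x + 1 by rewrite brute_eq; unfold x, L; ring.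
    set (Bm := Rmax b 1).
    have HBm1 : 1 <= Bm by apply Rmax_r.
    have HbB : b <= Bm by apply Rmax_l.
    have HBK : Bm < brute alpha.
    { unfold Bm. apply Rmax_lub_lt; [unfold b; lra| rewrite HK; lra]. }
    set (rho := Bm / brute alpha).
    have Hrho : 0 < rho < 1.
    { unfold rho. split; [apply Rdiv_lt_0_compat; lra|].
      apply (Rmult_lt_reg_r (brute alpha)); [lra|]. field_simplify; lra. }
    destruct (geo_poly rho (S c) N Hrho) as [n [HnN Hgeo]].
    destruct (max_term x n Hx) as [t [Htn Hmax]].
    set (G := Gfam n alpha t).
    set (tr := A n (w1 n)).
    set (nq := nqueries tr G).
    have Hr := Hrun n (w1 n) G ltac:(apply/leP; exact HnN) (mono_G n alpha t).
    fold tr nq in Hr.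
    set (E := exp (L * INR t)).
    have HE : 0 <= E by left; apply exp_pos.
    set (P := [set T : {set 'I_n} | #|T| == t]).
    have HPc : #|P| = 'C(n, t) by rewrite /P card_draws card_ord.
    have Hcount : INR #|P| <= INR (size (collect tr G)) * E.
    { apply: (count_bound n alpha t E P (collect tr G) HE).
      - move=> X HbX. case: (leqP t #|X|) => Htx.
        + rewrite INR_bin //. apply Cbound; auto. by apply/leP.
          apply Rnot_lt_le. move=> Hlt. move/negP: HbX. apply. by apply/bigbP.
        + by rewrite bin_small //.
      - move=> T. rewrite inE. by move/eqP.
      - move=> T. rewrite inE => /eqP HT. exact: (cover _ _ _ _ Ha' HA _ HT). }
    rewrite size_collect HPc INR_bin in Hcount; [|by apply/leP].
    fold nq in Hcount.
    have Hxt : x ^ t * E = 1 by apply exp_pow_neg.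
    have Hxt0 : 0 < x ^ t by apply pow_lt.
    have H1 : C n t * x ^ t <= INR nq.+1.
    { have := Rmult_le_compat_r (x ^ t) _ _ (Rlt_le _ _ Hxt0) Hcount.
      rewrite Rmult_assoc (Rmult_comm E) Hxt Rmult_1_r. auto. }
    rewrite S_INR in H1. rewrite S_INR in Hmax.
    set (Kn := (x + 1) ^ n) in *.
    set (Bn := Bm ^ n).
    set (P1 := (INR n + 1) ^ c).
    have Hn0 : 0 <= INR n by apply pos_INR.
    have HKn : Kn <= (INR n + 1) * (INR nq + 1).
    { have := Rle_trans _ _ _ Hmax H1. intro h.
      apply (Rmult_le_compat_l (INR n + 1)) in h; [|lra].
      replace ((INR n + 1) * (Kn / (INR n + 1))) with Kn in h by (field; lra). lra. }
    have HbBn : b ^ n <= Bn by apply pow_incr; lra.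
    have HP1 : INR n ^ c <= P1 by apply pow_incr; lra.
    have HBn1 : 1 <= Bn by apply pow_R1_Rle.
    have HP11 : 1 <= P1 by apply pow_R1_Rle; lra.
    have Hnc0 : 0 <= INR n ^ c by apply pow_le.
    have Hbn0 : 0 <= b ^ n by apply pow_le.
    have Hnq : INR nq <= Bn * P1.
    { eapply Rle_trans; [exact Hr|]. apply Rmult_le_compat; auto. }
    have Hnq2 : INR nq + 1 <= 2 * Bn * P1 by nra.
    have HK2 : Kn <= 2 * Bn * ((INR n + 1) * P1).
    { eapply Rle_trans; [exact HKn|].
      have := Rmult_le_compat_l (INR n + 1) _ _ ltac:(lra) Hnq2. intro h. nra. }
    have HKpos : 0 < Kn by apply pow_lt; lra.
    rewrite /rho /Rdiv Rpow_mult_distr pow_inv HK in Hgeo.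
    fold Kn Bn in Hgeo.
    change ((INR n + 1) ^ S c) with ((INR n + 1) * P1) in Hgeo.
    have := Rmult_lt_compat_r Kn _ _ HKpos Hgeo.
    replace (2 * (Bn * / Kn) * ((INR n + 1) * P1) * Kn) with (2 * Bn * ((INR n + 1) * P1)) by (field; lra).
    lra.
Qed.
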